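(* Let $s,d,t\ge1$, let $I=(G,D,\mathsf{cost},\mathsf{supply},\mathsf{demand})$ be an $(s,d)$-decent instance of Min Weight Generalized Domination and $Y\subseteq V(I)$. If every connected component $C$ of $G\setminus Y$ satisfies $|N(C)|\le t$, then the compressed instance $I\{Y\}$ is $(st,\,d+4^{st})$-decent.
   Context: An instance of Min Weight Generalized Domination consists of a loopless multigraph $G$ and for every vertex $u$: a finite domain $D_u$, $\mathsf{cost}_u\colon D_u\to\mathbb{R}_{\ge0}\cup\{+\infty\}$, and $\mathsf{supply}_u,\mathsf{demand}_u\colon D_u\to 2^{\delta(u)}$ ($\delta(u)$ = edges incident to $u$), with some $s_u\in D_u$ having $\mathsf{supply}_u(s_u)=\delta(u)$ and finite cost. Validity of a valuation on edge $e$ with endpoints $u,v$: $e\in\mathsf{demand}_u(\phi(u))\Rightarrow e\in\mathsf{supply}_v(\phi(v))$ and symmetrically; a valuation of $A$ is locally correct on $A$ if this holds for all edges inside $A$; costs are summed. A vertex is $(s,d)$-meager if $|\delta(u)|\le s$ and $|D_u|\le d$; state-monotonous if for all ordered $x_1,x_2\in D_u$ there is $x\in D_u$ with $\mathsf{cost}_u(x)\le\mathsf{cost}_u(x_1)+\mathsf{cost}_u(x_2)$, $\mathsf{supply}_u(x)=\mathsf{supply}_u(x_1)\cup\mathsf{supply}_u(x_2)$, $\mathsf{demand}_u(x)\subseteq\mathsf{demand}_u(x_1)$. An instance is $(s,d)$-decent if all vertices are $(s,d)$-meager and state-monotonous. For $R$ and $S=N(R)$, $E(R,S)$ is the set of edges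 between them and $\mathsf{interaction}_{R,S}(\phi)$ maps each $e\in E(R,S)$ with endpoint $u\in R$ to the subset of $\{\mathsf{Supply},\mathsf{Demand}\}$ containing $\mathsf{Supply}$ iff $e\in\mathsf{supply}_u(\phi(u))$ and $\mathsf{Demand}$ iff $e\in\mathsf{demand}_u(\phi(u))$. The compressed instance $I\{Y\}$: vertices of $Y$ keep domains, costs, supplies, demands and all incident edges (edges inside $Y$ kept). Each connected component $C_i$ of $G\setminus Y$ with nonempty $S_i=N(C_i)$ is collapsed (identified into one vertex, internal edges deleted) to a vertex $u_i$ incident exactly to the edges $E(C_i,S_i)$, with domain $(2^{\{\mathsf{Supply},\mathsf{Demand}\}})^{E(C_i,S_i)}$, $\mathsf{cost}_{u_i}(x)$ the minimum cost of a valuation of $C_i$ locally correct on $C_i$ with interaction $x$ (or $+\infty$), $\mathsf{supply}_{u_i}(x)=\{e\colon\mathsf{Supply}\in x(e)\}$, $\mathsf{demand}_{u_i}(x)=\{e\colon\mathsf{Demand}\in x(e)\}$. All components with empty neighborhood are collapsed together into one isolated vertex $u_\ominus$ with a one-element domain, whose cost is the minimum cost of a locally correct valuation of their union. *)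

(* Defs.v *)
From HB Require Import structures.
From mathcomp Require Import all_boot all_order all_algebra.
From mathcomp Require Import reals constructive_ereal.
Set Implicit Arguments. Unset Strict Implicit. Unset Printing Implicit Defensive.
Import Order.TTheory GRing.Theory Num.Theory.

Inductive SD := Supply | Demand.
Definition SD_to_bool (x : SD) := if x is Supply then true else false.
Definition bool_to_SD (b : bool) := if b then Supply else Demand.
Lemma SD_K : cancel SD_to_bool bool_to_SD. Proof. by case. Qed.
HB.instance Definition _ := Finite.copy SD (can_type SD_K).

Section Instances.
Variable R : realType.
Local Open Scope ereal_scope.

Record instance := Instance {
  vert : finType;
  edge : finType;
  src : edge -> vert;
  tgt : edge -> vert;
  dom : vert -> finType;
  cost : forall u, dom u -> \bar R;
  supply : forall u, dom u -> {set edge};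
  demand : forall u, dom u -> {set edge} }.

Variable I : instance.

Definition inc (u : vert I) : {set edge I} :=
  [set e | (src e == u) || (tgt e == u)].

Definition wf_instance : Prop :=
  [/\ forall e : edge I, src e != tgt e,
      forall (u : vert I) (x : @dom I u), supply x \subset inc u /\ demand x \subset inc u,
      forall (u : vert I) (x : @dom I u), 0 <= cost x
    & forall u : vert I, exists s_u : @dom I u, supply s_u = inc u /\ cost s_u < +oo].

Definition meager (s d : nat) (u : vert I) : Prop :=
  (#|inc u| <= s)%N /\ (#|@dom I u| <= d)%N.

Definition state_monotonous (u : vert I) : Prop :=
  forall x1 x2 : @dom I u, exists x : @dom I u,
    [/\ cost x <= cost x1 + cost x2,
        supply x = supply x1 :|: supply x2
      & demand x \subset demand x1].

Definition decent (s d : nat) : Prop :=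
  forall u : vert I, meager s d u /\ state_monotonous u.

Definition valuation := {dffun forall u : vert I, @dom I u}.

Definition valid_on (phi : valuation) (e : edge I) : bool :=
  ((e \in demand (phi (src e))) ==> (e \in supply (phi (tgt e)))) &&
  ((e \in demand (phi (tgt e))) ==> (e \in supply (phi (src e)))).

Definition locally_correct (A : {set vert I}) (phi : valuation) : bool :=
  [forall e : edge I, ((src e \in A) && (tgt e \in A)) ==> valid_on phi e].

Definition adj (u v : vert I) : bool :=
  [exists e : edge I, ((src e == u) && (tgt e == v)) || ((src e == v) && (tgt e == u))].

Definition NB (A : {set vert I}) : {set vert I} :=
  [set v | (v \notin A) && [exists u in A, adj u v]].

Definition adjY (Y : {set vert I}) : rel (vert I) :=
  fun a b => [&& a \notin Y, b \notin Y & adj a b].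

Definition compof (Y : {set vert I}) (v : vert I) : {set vert I} :=
  [set w | connect (adjY Y) v w].

Definition comps (Y : {set vert I}) : {set {set vert I}} :=
  [set compof Y v | v in ~: Y].

Definition compsN (Y : {set vert I}) : {set {set vert I}} :=
  [set C in comps Y | NB C != set0].

Definition U0 (Y : {set vert I}) : {set vert I} :=
  \bigcup_(C in comps Y | NB C == set0) C.

Definition ECS (C : {set vert I}) : {set edge I} :=
  [set e | ((src e \in C) && (tgt e \in NB C)) || ((tgt e \in C) && (src e \in NB C))].

Definition ECSt (C : {set vert I}) := {e : edge I | e \in ECS C}.

Definition interaction (C : {set vert I}) (phi : valuation)
  : {ffun ECSt C -> {set SD}} :=
  [ffun e : ECSt C =>
     let u := if src (val e) \in C then src (val e) else tgt (val e) in
     [set tg : SD | if tg is Supply then val e \in supply (phi u)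
                    else val e \in demand (phi u)]].

(* minimum cost of a valuation of C, locally correct on C, with interaction x.
   (A valuation of C is the restriction of a valuation of V(I); domains are
   nonempty for well-formed instances.) *)
Definition comp_cost (C : {set vert I}) (x : {ffun ECSt C -> {set SD}}) : \bar R :=
  \big[Order.min/+oo]_(phi : valuation | locally_correct C phi && (interaction C phi == x))
     (\sum_(u in C) cost (phi u)).

Definition ominus_cost (Y : {set vert I}) : \bar R :=
  \big[Order.min/+oo]_(phi : valuation | locally_correct (U0 Y) phi)
     (\sum_(u in U0 Y) cost (phi u)).

Section Compress.
Variable Y : {set vert I}.

Definition Ysub := {x : vert I | x \in Y}.
Definition Csub := {C : {set vert I} | C \in compsN Y}.
(* vertices of I{Y}: Y, one vertex u_i per component with nonempty
   neighbourhood, and the isolated vertex u_ominus *)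
Definition cvert : finType := Finite.clone ((Ysub + Csub) + unit)%type _.
Definition cedge : finType := Finite.clone {e : edge I | (src e \in Y) || (tgt e \in Y)} _.

Definition vmap (v : vert I) : cvert :=
  if (insub v : option Ysub) is Some y then inl (inl y)
  else if (insub (compof Y v) : option Csub) is Some C then inl (inr C)
  else inr tt.

Definition cdom (w : cvert) : finType :=
  match w with
  | inl (inl y) => @dom I (val y)
  | inl (inr C) => Finite.clone {ffun ECSt (val C) -> {set SD}} _
  | inr _ => Finite.clone unit _
  end.

Definition ccost (w : cvert) : cdom w -> \bar R :=
  match w as w return cdom w -> \bar R with
  | inl (inl y) => fun x => cost x
  | inl (inr C) => fun x => comp_cost x
  | inr _ => fun _ => ominus_cost Y
  end.

Definition csupply (w : cvert) : cdom w -> {set cedge} :=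
  match w as w return cdom w -> {set cedge} with
  | inl (inl y) => fun x => [set e : cedge | val e \in supply x]
  | inl (inr C) => fun x => [set e : cedge |
       if (insub (val e) : option (ECSt (val C))) is Some e0 then Supply \in x e0 else false]
  | inr _ => fun _ => set0
  end.

Definition cdemand (w : cvert) : cdom w -> {set cedge} :=
  match w as w return cdom w -> {set cedge} with
  | inl (inl y) => fun x => [set e : cedge | val e \in demand x]
  | inl (inr C) => fun x => [set e : cedge |
       if (insub (val e) : option (ECSt (val C))) is Some e0 then Demand \in x e0 else false]
  | inr _ => fun _ => set0
  end.

Definition compress : instance :=
  @Instance cvert cedge (fun e => vmap (src (val e))) (fun e => vmap (tgt (val e)))
    cdom ccost csupply cdemand.

End Compress.
End Instances.

(* Main.v *)
Require Import Defs.
From HB Require Import structures.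
From mathcomp Require Import all_boot all_order all_algebra.
From mathcomp Require Import reals constructive_ereal.
Set Implicit Arguments. Unset Strict Implicit. Unset Printing Implicit Defensive.
Import Order.TTheory GRing.Theory Num.Theory.

Lemma card_bigcup_le (T J : finType) (A : {set J}) (F : J -> {set T}) k :
  (forall j, #|F j| <= k)%N -> (#|\bigcup_(j in A) F j| <= #|A| * k)%N.
Proof.
move=> Hk; rewrite -sum_nat_const.
apply: (@leq_trans (\sum_(j in A) #|F j|)); last by apply: leq_sum => j _.
elim/big_rec2: _ => [|j X n _ IH]; first by rewrite cards0.
apply: leq_trans (leq_card_setU _ _) _; by rewrite leq_add2l.
Qed.

Lemma card_SD : #|{: SD}| = 2.
Proof. rewrite (bij_eq_card (f:=SD_to_bool)) ?card_bool //. by exists bool_to_SD; [case|case]. Qed.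
Lemma card_setSD : #|{: {set SD}}| = 4.
Proof. by rewrite -cardsT -powersetT card_powerset cardsT card_SD. Qed.

Section S.
Variables (R : realType) (I : instance R) (Y : {set vert I}).
Local Open Scope ereal_scope.

Lemma compofY v w : v \notin Y -> w \in compof Y v -> w \notin Y.
Proof.
move=> vY; rewrite inE => /connectP [p pth ->] {w}.
elim: p v vY pth => [|a p IH] v vY //= /andP [/and3P [_ aY _] pth]. exact: IH pth.
Qed.

Lemma comps_avoid C x : C \in comps Y -> x \in C -> x \notin Y.
Proof. by move=> /imsetP [v]; rewrite inE => vY -> ; exact: compofY. Qed.

Lemma compof_self v : v \in compof Y v.
Proof. by rewrite inE connect0. Qed.

Lemma nbY C x y : C \in comps Y -> x \in C -> y \in Y -> adj x y -> y \in NB C.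
Proof.
move=> HC xC yY a; rewrite inE; apply/andP; split.
  by apply/negP=> yC; move: (comps_avoid HC yC); rewrite yY.
by apply/existsP; exists x; rewrite xC.
Qed.

Lemma adj_st (e : edge I) : adj (src e) (tgt e) /\ adj (tgt e) (src e).
Proof. by split; apply/existsP; exists e; rewrite !eqxx ?orbT. Qed.

Lemma vmap_y v y : vmap Y v = inl (inl y) -> v = val y.
Proof.
rewrite /vmap; case: insubP => [y' _ <- [<-] //| _].
by case: insubP.
Qed.

Lemma vmap_C v C : vmap Y v = inl (inr C) -> v \notin Y /\ val C = compof Y v.
Proof.
rewrite /vmap; case: insubP => [//| vY].
by case: insubP => [C' _ <- [<-] //| _].
Qed.

Lemma vmap_tt v : vmap Y v = inr tt -> v \notin Y /\ compof Y v \notin compsN Y.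
Proof.
rewrite /vmap; case: insubP => [//| vY].
by case: insubP => [//| H _].
Qed.


Lemma bigmin_attain (P : pred (valuation I)) (F : valuation I -> \bar R) phi0 :
  P phi0 -> exists2 phi, P phi & \big[Order.min/+oo]_(phi | P phi) F phi = F phi.
Proof.
move=> P0; rewrite (bigmin_eq_arg _ phi0 _ _ P0); last by move=> i _; exact: leey.
by exists [arg min_(i < phi0 | P i) F i]%O => //; case: arg_minP.
Qed.

Lemma bigmin_nonneg (P : pred (valuation I)) (A : {set vert I}) :
  (forall u (x : @dom R I u), 0 <= cost x) ->
  0 <= \big[Order.min/+oo]_(phi | P phi) \sum_(u in A) cost (phi u).
Proof.
move=> H; elim/big_ind: _ => //; first by rewrite leey.
  by move=> a b ha hb; rewrite le_min ha hb.
by move=> phi _; apply: sume_ge0 => u _.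
Qed.


Lemma comp_mono (C : {set vert I}) (x1 x2 : {ffun ECSt C -> {set SD}}) :
  (forall u (x : @dom R I u), 0 <= cost x) -> (forall u, @state_monotonous R I u) ->
  exists x : {ffun ECSt C -> {set SD}},
    [/\ comp_cost x <= comp_cost x1 + comp_cost x2,
        forall e, (Supply \in x e) = (Supply \in x1 e) || (Supply \in x2 e)
      & forall e, Demand \in x e -> Demand \in x1 e].
Proof.
move=> H0 Hm.
pose xu : {ffun ECSt C -> {set SD}} := [ffun e => [set tg : SD |
   if tg is Supply then (Supply \in x1 e) || (Supply \in x2 e) else Demand \in x1 e]].
have xuS e : (Supply \in xu e) = (Supply \in x1 e) || (Supply \in x2 e) by rewrite ffunE inE.
have xuD e : Demand \in xu e -> Demand \in x1 e by rewrite ffunE inE.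
have nn (x : {ffun ECSt C -> {set SD}}) : comp_cost x != -oo.
  have h : 0 <= comp_cost x := bigmin_nonneg _ C H0.
  by apply: contraTneq h => ->.
case: (pickP (fun phi : valuation I => locally_correct C phi && (interaction C phi == x1))) => [phi0 P0|N1]; last first.
  exists xu; split => //.
  rewrite {2}/comp_cost big_pred0 //; case: (comp_cost x2) (nn x2) => //= *; exact: leey.
case: (pickP (fun phi : valuation I => locally_correct C phi && (interaction C phi == x2))) => [phi3 P3|N2]; last first.
  exists xu; split => //.
  rewrite [comp_cost x2]/comp_cost big_pred0 //; case: (comp_cost x1) (nn x1) => //= *; exact: leey.
have [phi1 P1 E1] := @bigmin_attain (fun phi : valuation I => locally_correct C phi && (interaction C phi == x1)) (fun phi => \sum_(u in C) cost (phi u)) _ P0.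
have [phi2 P2 E2] := @bigmin_attain (fun phi : valuation I => locally_correct C phi && (interaction C phi == x2)) (fun phi => \sum_(u in C) cost (phi u)) _ P3.
pose g u (a b : @dom R I u) : @dom R I u := odflt a [pick x | [&& cost x <= cost a + cost b,
   supply x == supply a :|: supply b & demand x \subset demand a]].
have gP u a b : [&& cost (g u a b) <= cost a + cost b,
   supply (g u a b) == supply a :|: supply b & demand (g u a b) \subset demand a].
  rewrite /g; case: pickP => //= Hn; exfalso.
  have [x [h1 h2 h3]] := Hm u a b; move: (Hn x); by rewrite h1 h2 eqxx h3.
pose psi : valuation I := @finfun _ (fun u => @dom R I u) (fun u => g u (phi1 u) (phi2 u)).
have psiC u : cost (psi u) <= cost (phi1 u) + cost (phi2 u).
  by rewrite ffunE; case/and3P: (gP u (phi1 u) (phi2 u)).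
have psiS u : supply (psi u) = supply (phi1 u) :|: supply (phi2 u).
  by rewrite ffunE; case/and3P: (gP u (phi1 u) (phi2 u)) => _ /eqP.
have psiD u : demand (psi u) \subset demand (phi1 u).
  by rewrite ffunE; case/and3P: (gP u (phi1 u) (phi2 u)).
move: P1 P2 => /andP [lc1 /eqP ex1] /andP [lc2 /eqP ex2].
have lcp : locally_correct C psi.
  apply/forallP => e; apply/implyP => /andP [se te].
  move/forallP: lc1 => /(_ e); rewrite se te /= /valid_on => /andP [h1 h2].
  apply/andP; split; apply/implyP => d.
    by rewrite psiS inE (implyP h1) //; apply: (subsetP (psiD _)).
  by rewrite psiS inE (implyP h2) //; apply: (subsetP (psiD _)).
exists (interaction C psi); split.
- rewrite /comp_cost E1 E2.
  apply: le_trans (@bigmin_le_cond _ _ _ +oo psi _ _ _) _; first by rewrite lcp eqxx.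
  rewrite -big_split /=; exact: lee_sum.
- by move=> e; rewrite -ex1 -ex2 !ffunE !inE psiS inE.
- by move=> e; rewrite -ex1 !ffunE !inE; apply: (subsetP (psiD _)).
Qed.

End S.

Theorem lemma4p8 (R : realType) (I : instance R) (s d t : nat) (Y : {set vert I}) :
  (0 < s)%N -> (0 < d)%N -> (0 < t)%N ->
  wf_instance I -> decent I s d ->
  (forall C, C \in comps Y -> (#|NB C| <= t)%N) ->
  decent (compress Y) (s * t) (d + 4 ^ (s * t)).
Proof.
move=> s0 d0 t0 [H1 H2 H3 H4] Hdec HN [[y|C]|[]].
- split; first split.
  + apply: (@leq_trans s); last by rewrite leq_pmulr.
    rewrite -(card_imset _ val_inj).
    apply: leq_trans (subset_leq_card _) (proj1 (proj1 (Hdec (val y)))).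
    apply/subsetP => _ /imsetP [e He ->]; move: He; rewrite !inE.
    by case/orP => /eqP h; rewrite (vmap_y h) eqxx ?orbT.
  + exact: leq_trans (proj2 (proj1 (Hdec _))) (leq_addr _ _).
  + move=> x1 x2; have [x [h1 h2 h3]] := proj2 (Hdec (val y)) x1 x2.
    exists x; split => //.
      by apply/setP => e; rewrite !inE h2 inE.
    by apply/subsetP => e; rewrite !inE; exact: (subsetP h3).
- have Hc : val C \in comps Y by move: (valP C); rewrite inE => /andP [].
  have Hb : (#|\bigcup_(v in NB (val C)) inc v| <= s * t)%N.
    apply: leq_trans (card_bigcup_le _ (fun v => proj1 (proj1 (Hdec v)))) _.
    by rewrite [s * t]mulnC leq_mul2r HN ?orbT.
  split; first split.
  + rewrite -(card_imset _ val_inj); apply: leq_trans (subset_leq_card _) Hb.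
    apply/subsetP => _ /imsetP [e He ->]; move: He; rewrite !inE.
    have := valP e => /= Hy.
    case/orP => /eqP /vmap_C [nY EC]; apply/bigcupP.
      have tY : tgt (val e) \in Y by move: Hy; rewrite (negbTE nY).
      exists (tgt (val e)); last by rewrite inE eqxx orbT.
      apply: nbY Hc _ tY (proj1 (adj_st _)); by rewrite EC compof_self.
    have sY : src (val e) \in Y by move: Hy; rewrite (negbTE nY) orbF.
    exists (src (val e)); last by rewrite inE eqxx.
    apply: nbY Hc _ sY (proj2 (adj_st _)); by rewrite EC compof_self.
  + rewrite /= card_ffun card_setSD card_sig.
    apply: leq_trans (leq_addl _ _); rewrite leq_pexp2l //.
    apply: leq_trans Hb; apply: subset_leq_card.
    apply/subsetP => e; rewrite !inE => /orP [] /andP [_ h]; apply/bigcupP.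
      by exists (tgt e); [rewrite inE | rewrite inE eqxx orbT].
    by exists (src e); [rewrite inE | rewrite inE eqxx].
  + move=> x1 x2; have [x [h1 h2 h3]] := comp_mono x1 x2 H3 (fun u => proj2 (Hdec u)).
    exists x; split => //.
      by apply/setP => e; rewrite !inE; case: insubP => //= e0 _ _; exact: h2.
    by apply/subsetP => e; rewrite !inE; case: insubP => //= e0 _ _; exact: h3.
- split; first split.
  + suff -> : @inc R (compress Y) (inr tt) = set0 by rewrite cards0.
    apply/setP => e; rewrite !inE; apply/negbTE/negP.
    have := valP e => /= Hy.
    case/orP => /eqP /vmap_tt [nY nC]; apply: (negP nC); rewrite inE.
      have tY : tgt (val e) \in Y by move: Hy; rewrite (negbTE nY).
      have Hc : compof Y (src (val e)) \in comps Y by apply/imsetP; exists (src (val e)); rewrite ?inE.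
      rewrite Hc /=; apply/set0Pn; exists (tgt (val e)).
      exact: nbY Hc (compof_self _ _) tY (proj1 (adj_st _)).
    have sY : src (val e) \in Y by move: Hy; rewrite (negbTE nY) orbF.
    have Hc : compof Y (tgt (val e)) \in comps Y by apply/imsetP; exists (tgt (val e)); rewrite ?inE.
    rewrite Hc /=; apply/set0Pn; exists (src (val e)).
    exact: nbY Hc (compof_self _ _) sY (proj2 (adj_st _)).
  + by rewrite /= card_unit; apply: leq_trans d0 (leq_addr _ _).
  + move=> x1 x2; exists tt; split => /=.
    * by apply: lee_paddl; [exact: bigmin_nonneg | exact: le_refl].
    * by rewrite setU0.
    * exact: sub0set.
Qed.
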